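(* Let $A$ be a nonempty finite set of $n$ alternatives and let $C$ be a capacity-wise lexicographic choice rule on $A$ with associated lists $\pi_q=(\succ^q_1,\dots,\succ^q_q)$, $q\in\{1,\dots,n\}$. If for each $q\in\{2,\dots,n\}$ the list $\pi_q$ is obtained by insertion from $\pi_{q-1}$, then $C$ satisfies monotonicity, i.e. $C(S,q)\subseteq C(S,q+1)$ for all nonempty $S\subseteq A$ and $q\in\{1,\dots,n-1\}$.
   Context: A choice rule assigns to each pair $(S,q)$, $S$ a nonempty subset of $A$ and $q\in\{1,\dots,n\}$, a nonempty $C(S,q)\subseteq S$ with $|C(S,q)|\le q$. A priority ordering is a complete, transitive, antisymmetric relation on $A$. $C$ is capacity-wise lexicographic with lists $\pi_q=(\succ^q_1,\dots,\succ^q_q)$ of priority orderings if for each $(S,q)$, $C(S,q)$ is obtained by choosing the $\succ^q_1$-highest element of $S$, then the $\succ^q_2$-highest among the remaining, and so on, until $q$ are chosen or none is left. A list $\pi'=(\succ'_1,\dots,\succ'_{q+1})$ is obtained by insertion from $\pi=(\succ_1,\dots,\succ_q)$ if there is $k\in\{1,\dots,q+1\}$ with $\succ'_l=\succ_l$ for all $l<k$ and $\succ'_l=\succ_{l-1}$ for all $l>k$. *)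

(* Defs.v *)
From mathcomp Require Import all_boot.
Set Implicit Arguments. Unset Strict Implicit. Unset Printing Implicit Defensive.

(* A priority ordering on A, as a boolean relation [r x y] meaning
   "x is ranked weakly above y" (x ≻ y or x = y): complete (total),
   transitive, antisymmetric. *)
Definition priority_ordering (A : finType) (r : rel A) : Prop :=
  total r /\ transitive r /\ antisymmetric r.

Definition top_elt (A : finType) (r : rel A) (S : {set A}) : option A :=
  [pick x in S | [forall y in S, r x y]].

Fixpoint lex_choice (A : finType) (pi : seq (rel A)) (S : {set A}) : {set A} :=
  match pi with
  | [::] => set0
  | r :: pi' =>
      match top_elt r S with
      | Some x => x |: lex_choice pi' (S :\ x)
      | None => set0
      end
  end.

Definition choice_rule (A : finType) (C : {set A} -> nat -> {set A}) : Prop :=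
  forall S q, S != set0 -> 1 <= q <= #|A| ->
    [/\ C S q != set0, C S q \subset S & #|C S q| <= q].

Definition capacity_wise_lexicographic (A : finType)
    (C : {set A} -> nat -> {set A}) (pi : nat -> seq (rel A)) : Prop :=
  forall q, 1 <= q <= #|A| ->
    size (pi q) = q /\ (forall i, i < q -> priority_ordering (nth (fun _ _ => true) (pi q) i)) /\
    (forall S, S != set0 -> C S q = lex_choice (pi q) S).

(* pi' is obtained by insertion from pi: some ordering is inserted at some
   position k (0-indexed here, k in 0..size pi), the rest shifting right. *)
Definition obtained_by_insertion (A : finType) (pi pi' : seq (rel A)) : Prop :=
  exists k r, k <= size pi /\ pi' = take k pi ++ r :: drop k pi.

Definition monotonic (A : finType) (C : {set A} -> nat -> {set A}) : Prop :=
  forall S q, S != set0 -> 1 <= q <= #|A| - 1 -> C S q \subset C S q.+1.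

(* Main.v *)
Require Import Defs.
From mathcomp Require Import all_boot.
From mathcomp Require Import zify.
Set Implicit Arguments. Unset Strict Implicit. Unset Printing Implicit Defensive.

Section L.
Variable A : finType.

Lemma top_spec (r : rel A) (S : {set A}) y : top_elt r S = Some y ->
  y \in S /\ forall z, z \in S -> r y z.
Proof.
rewrite /top_elt; case: pickP => // z /andP[zS /forall_inP H] [<-]; split=> //.
Qed.

Lemma top_ex (r : rel A) (S : {set A}) : priority_ordering r -> S != set0 ->
  exists y, top_elt r S = Some y.
Proof.
move=> [tot [tr _]] S0.
rewrite /top_elt; case: pickP => [y _|H]; first by exists y.
exfalso.
have : perm_eq (sort r (enum S)) (enum S) by rewrite perm_sort perm_refl.
case E: (sort r (enum S)) => [|y s].
  move=> /perm_size; rewrite -cardE /= => /esym /eqP; rewrite cards_eq0.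
  by rewrite (negbTE S0).
move=> Hp.
have yS : y \in S by rewrite -mem_enum -(perm_mem Hp) mem_head.
have := H y; rewrite yS /=; move/negP; apply; apply/forall_inP => z zS.
have hs := sort_sorted tot (enum S); rewrite E /= in hs.
have := order_path_min tr hs => /allP Ha.
have : z \in y :: s by rewrite (perm_mem Hp) mem_enum.
rewrite in_cons => /orP[/eqP->|zs]; last exact: Ha.
by have := tot y y; rewrite orbb.
Qed.

Lemma top_uniq (r : rel A) (S : {set A}) y : priority_ordering r -> y \in S ->
  (forall z, z \in S -> r y z) -> top_elt r S = Some y.
Proof.
move=> Hr yS Hy.
have [|z Hz] := top_ex Hr (S:=S); first by apply/set0Pn; exists y.
rewrite Hz; have [zS Hz'] := top_spec Hz.
case: Hr => _ [_ anti]; congr Some; apply: anti.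
by rewrite Hz' // Hy.
Qed.

Lemma lex0 (pi : seq (rel A)) : lex_choice pi set0 = set0.
Proof.
case: pi => //= r pi; rewrite /top_elt; case: pickP => // z /andP[].
by rewrite in_set0.
Qed.

Definition allgood (pi : seq (rel A)) :=
  forall i, i < size pi -> priority_ordering (nth (fun _ _ => true) pi i).

Lemma allgood_tail r pi : allgood (r :: pi) -> allgood pi /\ priority_ordering r.
Proof.
move=> H; split; last exact: (H 0).
by move=> i Hi; apply: (H i.+1).
Qed.

Lemma lexP (pi : seq (rel A)) : allgood pi -> forall (S : {set A}) x,
  lex_choice pi S \subset x |: lex_choice pi (S :\ x).
Proof.
elim: pi => [|r pi IH] Hg S x /=; first by rewrite sub0set.
have [Hg' Hr] := allgood_tail Hg.
case Ey: (top_elt r S) => [y|]; last by rewrite sub0set.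
have [yS Hy] := top_spec Ey.
have [->|xy] := eqVneq y x.
  case Ez: (top_elt r (S :\ x)) => [z|].
    apply: setUS; apply: subset_trans (IH Hg' (S :\ x) z) _.
    exact: subxx.
  have S0 : S :\ x = set0.
    apply/eqP; apply/negPn/negP => H; have [z Hz] := top_ex Hr H.
    by rewrite Hz in Ez.
  by rewrite S0 lex0 setU0 subxx.
have -> : top_elt r (S :\ x) = Some y.
  apply: top_uniq => //; first by rewrite !inE xy yS.
  by move=> z; rewrite inE => /andP[_]; apply: Hy.
rewrite setUCA; apply: setUS; apply: subset_trans (IH Hg' (S :\ y) x) _.
by have -> : S :\ y :\ x = S :\ x :\ y by rewrite !setDDl setUC.
Qed.

Lemma lexI k (pi : seq (rel A)) r (S : {set A}) : allgood pi -> priority_ordering r ->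
  lex_choice pi S \subset lex_choice (take k pi ++ r :: drop k pi) S.
Proof.
elim: k pi S => [|k IH] pi S Hg Hr.
  rewrite take0 drop0 /=.
  have [->|S0] := eqVneq S set0; first by rewrite lex0 sub0set.
  have [x Hx] := top_ex Hr S0; rewrite Hx; exact: lexP.
case: pi Hg => [|h pi] Hg /=; first by rewrite sub0set.
have [Hg' _] := allgood_tail Hg.
case: (top_elt h S) => [y|]; last by rewrite subxx.
by apply: setUS; apply: IH.
Qed.

End L.

Theorem lemma2 (A : finType) (C : {set A} -> nat -> {set A})
    (pi : nat -> seq (rel A)) :
  0 < #|A| ->
  choice_rule C ->
  capacity_wise_lexicographic C pi ->
  (forall q, 2 <= q <= #|A| -> obtained_by_insertion (pi q.-1) (pi q)) ->
  monotonic C.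
Proof.
move=> _ _ Hc Hi S q S0 /andP[q1 qn].
have qA : q < #|A| by lia.
have h1 : 1 <= q <= #|A| by lia.
have h2 : 1 <= q.+1 <= #|A| by lia.
have h3 : 2 <= q.+1 <= #|A| by lia.
have [s1 [g1 E1]] := Hc q h1.
have [s2 [g2 E2]] := Hc q.+1 h2.
rewrite E1 // E2 //.
have [k [r [Hk Ep]]] := Hi q.+1 h3.
rewrite Ep; apply: lexI.
  by move=> i; rewrite s1; apply: g1.
have Hn : nth (fun _ _ => true) (take k (pi q) ++ r :: drop k (pi q)) k = r.
  by rewrite nth_cat size_takel // ltnn subnn.
rewrite -Hn -Ep; apply: g2; move: Hk; rewrite /= s1; lia.
Qed.
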